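(* Let $O$, $A$, $\mathcal A_O$ be as in the context, and let $\Omega=\{\omega_1,\dots,\omega_N\}\subseteq A^m$. Let $R$ be a matrix over $O$ whose rows generate the left submodule $\bigcap_{i=1}^N\ker(\kappa_{\omega_i})\subseteq O^{1\times m}$. Then $\{g\in\mathcal A_O^m:R\bullet g=0\}$ is the VMPUM of $\Omega$: it contains $\Omega$, and it is contained in $\{g\in\mathcal A_O^m:R'\bullet g=0\}$ for every matrix $R'\in O^{r'\times m}$ with $R'\bullet\omega_i=0$ for all $i$.
   Context: Let $K$ be a field, $A=K[t_1,\dots,t_n]$, and $O=A[\partial_1;\sigma_1,\delta_1]\cdots[\partial_s;\sigma_s,\delta_s]$ a left Noetherian Ore algebra (iterated Ore extension with commuting $\partial_i$, commuting $\sigma_i,\delta_j$, injective $K$-algebra endomorphisms $\sigma_i$ and $\sigma_i$-derivations $\delta_i$ preserving $A$, $\sigma_i(\partial_j)=\partial_j$, $\delta_i(\partial_j)=0$; multiplication via $\partial_ia=\sigma_i(a)\partial_i+\delta_i(a)$). $A$ is a left $O$-module via $\partial_i\bullet p=\delta_i(p)$, $a\bullet p=ap$. $\mathcal A_O$ is a $K$-vector space of functions with a left $O$-module structure containing $A$ as an $O$-submodule. For $R\in O^{r\times m}$, $(R\bullet g)_i=\sum_jR_{ij}\bullet g_j$. For $p\in A^m$, $\ker(\kappa_p)=\{o\in O^{1\times m}:\sum_io_i\bullet p_i=0\}$ (the kernel of $[o_1,\dots,o_m]\mapsto\sum_io_i[p_i]\in O/{}_O\langle\partial_1,\dots,\partial_s\rangle$).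 A behavior is a set $\{g\in\mathcal A_O^m:R\bullet g=0\}$; the VMPUM of $\Omega$ is a behavior containing $\Omega$ and contained in every behavior containing $\Omega$. *)

(* Defs.v *)
From HB Require Import structures.
From mathcomp Require Import all_boot all_order all_algebra.
Set Implicit Arguments. Unset Strict Implicit. Unset Printing Implicit Defensive.
Import GRing.Theory.
Local Open Scope ring_scope.

Definition mxact (O : nzRingType) (V : lmodType O) (r m : nat)
  (R : 'M[O]_(r, m)) (g : 'I_m -> V) : 'I_r -> V :=
  fun i => \sum_(j < m) R i j *: g j.

Definition behavior (O : nzRingType) (V : lmodType O) (r m : nat)
  (R : 'M[O]_(r, m)) (g : 'I_m -> V) : Prop :=
  forall i : 'I_r, mxact R g i = 0.

Definition ker_kappa (O : nzRingType) (A : lmodType O) (m : nat)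
  (p : 'I_m -> A) (o : 'rV[O]_m) : Prop :=
  \sum_(j < m) o 0 j *: p j = 0.

Definition is_VMPUM (O : nzRingType) (V : lmodType O) (m : nat)
  (Omega : ('I_m -> V) -> Prop) (B : ('I_m -> V) -> Prop) : Prop :=
  [/\ (exists (r : nat) (R : 'M[O]_(r, m)), forall g, B g <-> behavior R g),
      (forall g, Omega g -> B g) &
      (forall (r' : nat) (R' : 'M[O]_(r', m)),
          (forall g, Omega g -> behavior R' g) ->
          forall g, B g -> behavior R' g)].

(* Main.v *)
Require Import Defs.
From HB Require Import structures.
From mathcomp Require Import all_boot all_order all_algebra.
Local Open Scope ring_scope.
Import GRing.Theory.

Theorem theorem4p5
  (O : nzRingType) (A AO : lmodType O)
  (iota : {linear A -> AO}) (iota_inj : injective iota)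
  (m N r : nat) (omega : 'I_N -> ('I_m -> A))
  (R : 'M[O]_(r, m))
  (hR : forall o : 'rV[O]_m,
      (forall i : 'I_N, ker_kappa (omega i) o) <->
      (exists x : 'rV[O]_r, o = x *m R)) :
  is_VMPUM
    (fun g : 'I_m -> AO => exists i : 'I_N, g = (fun j => iota (omega i j)))
    (behavior R).
Proof.
have Hi : forall (n : nat) (M : 'M[O]_(n, m)) (i : 'I_N) (k : 'I_n),
    mxact M (fun j => iota (omega i j)) k = iota (\sum_(j < m) M k j *: omega i j).
  move=> n M i k; rewrite /mxact linear_sum; apply: eq_bigr => j _.
  by rewrite linearZ.
split.
- by exists r, R.
- move=> g [i ->] l; rewrite Hi.
  have : ker_kappa (omega i) (row l R).
    by apply/(proj2 (hR _)); exists (delta_mx 0 l); rewrite rowE.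
  rewrite /ker_kappa => H.
  have -> : \sum_(j < m) R l j *: omega i j = 0.
    by rewrite -[RHS]H; apply: eq_bigr => j _; rewrite mxE.
  by rewrite linear0.
- move=> r' R' HR' g Hg k.
  have : exists x : 'rV[O]_r, row k R' = x *m R.
    apply/(proj1 (hR _)) => i.
    have := HR' _ (ex_intro _ i erefl) k; rewrite Hi -(linear0 iota) => /iota_inj.
    move=> H; rewrite /ker_kappa -[RHS]H; apply: eq_bigr => j _; by rewrite mxE.
  case=> x Hx.
  rewrite /mxact.
  have -> : \sum_(j < m) R' k j *: g j = \sum_(j < m) (x *m R) 0 j *: g j.
    by apply: eq_bigr => j _; rewrite -Hx mxE.
  under eq_bigr => j _ do rewrite mxE scaler_suml.
  rewrite exchange_big /= big1 // => l _.
  under eq_bigr => j _ do rewrite -scalerA.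
  by rewrite -scaler_sumr; have := Hg l; rewrite /mxact => ->; rewrite scaler0.
Qed.
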